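(* For a fixed typed DAG task $G=(V,E,\gamma,c)$, the quantity \[ B_1(M)=len(\hat G)+\sum_{s\in S}\frac{vol_s(G)}{M_s} \] is non-increasing in each $M_s$ (with the other $M_{s'}$ fixed), i.e., increasing the number of cores of any type never increases this bound.
   Context: A typed DAG task is $G=(V,E,\gamma,c)$ where $(V,E)$ is a finite directed acyclic graph with a unique source and a unique sink, $S$ is a finite set of core types, $\gamma:V\to S$ gives the type of each vertex, and $c:V\to\mathbb{R}_{\ge0}$ gives the WCET of each vertex. The platform has $M_s\ge1$ cores of type $s$, $M=(M_s)_{s\in S}$. $vol_s(G)=\sum_{u\in V,\gamma(u)=s}c(u)$. The scaled graph $\hat G$ has the same vertices, edges and types as $G$ with weights $\hat c(v)=c(v)(1-1/M_{\gamma(v)})$, and $len(\hat G)$ is its longest path length with respect to $\hat c$ (which depends on $M$). *)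

(* Defs.v *)
From HB Require Import structures.
From mathcomp Require Import all_boot all_order all_algebra.
Set Implicit Arguments. Unset Strict Implicit. Unset Printing Implicit Defensive.
Import Order.TTheory GRing.Theory Num.Theory.
Local Open Scope ring_scope.

Definition acyclic (V : finType) (E : rel V) : Prop :=
  forall (x : V) (p : seq V), path E x p -> x \notin p.

Definition is_source (V : finType) (E : rel V) (v : V) : bool :=
  [forall u, ~~ E u v].
Definition is_sink (V : finType) (E : rel V) (v : V) : bool :=
  [forall u, ~~ E v u].

Definition typed_dag (V : finType) (E : rel V) : Prop :=
  [/\ acyclic E,
      #|[set v | is_source E v]| = 1%N &
      #|[set v | is_sink E v]| = 1%N].

Definition vol (R : realFieldType) (V S : finType) (gamma : V -> S)
  (c : V -> R) (s : S) : R :=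
  \sum_(u : V | gamma u == s) c u.

Definition chat (R : realFieldType) (V S : finType) (gamma : V -> S)
  (c : V -> R) (M : S -> nat) (v : V) : R :=
  c v * (1 - ((M (gamma v))%:R)^-1).

Definition path_weight (R : realFieldType) (V : finType) (w : V -> R)
  (p : seq V) : R := \sum_(v <- p) w v.

(* Longest path length w.r.t. vertex weights w: maximum of path_weight over
   all nonempty simple E-paths (tuples of size n+1 < #|V|+1; every simple
   path has at most #|V| vertices, and in a DAG every path is simple).
   The default 0 is harmless since weights are nonnegative. *)
Definition longest_path (R : realFieldType) (V : finType) (E : rel V)
  (w : V -> R) : R :=
  \big[Num.max/0]_(n < #|V|)
    \big[Num.max/0]_(t : n.+1.-tuple V | path E (thead t) (behead t) && uniq t)
      path_weight w t.

Definition len_hat (R : realFieldType) (V S : finType) (E : rel V)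
  (gamma : V -> S) (c : V -> R) (M : S -> nat) : R :=
  longest_path E (chat gamma c M).

Definition B1 (R : realFieldType) (V S : finType) (E : rel V)
  (gamma : V -> S) (c : V -> R) (M : S -> nat) : R :=
  len_hat E gamma c M + \sum_(s : S) vol gamma c s / (M s)%:R.

(* Main.v *)
Require Import Defs.
From HB Require Import structures.
From mathcomp Require Import all_boot all_order all_algebra.
From mathcomp Require Import ring lra.
Import Order.TTheory GRing.Theory Num.Theory.
Local Open Scope ring_scope.

Lemma bigmax0_ub (R : realFieldType) (I : finType) (P : pred I) (F : I -> R) (i : I) :
  P i -> F i <= \big[Num.max/0]_(j | P j) F j.
Proof. by move=> Pi; rewrite (bigD1 i) //= le_max lexx. Qed.

Lemma bigmax0_le (R : realFieldType) (I : finType) (P : pred I) (F : I -> R) (K : R) :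
  0 <= K -> (forall i, P i -> F i <= K) -> \big[Num.max/0]_(j | P j) F j <= K.
Proof.
move=> K0 HF; elim/big_ind: _ => //.
  by move=> x y hx hy; rewrite ge_max hx hy.
Qed.

Lemma bigmax0_ge0 (R : realFieldType) (I : finType) (P : pred I) (F : I -> R) :
  0 <= \big[Num.max/0]_(j | P j) F j.
Proof.
elim/big_rec: _ => // i x _ hx; by rewrite le_max hx orbT.
Qed.

Theorem corollary2 (R : realFieldType) (V S : finType) (E : rel V)
  (gamma : V -> S) (c : V -> R)
  (hG : typed_dag E) (hc : forall v, 0 <= c v)
  (M M' : S -> nat) (s : S)
  (hM : forall t, (1 <= M t)%N)
  (hle : (M s <= M' s)%N)
  (hother : forall t, t != s -> M' t = M t) :
  B1 E gamma c M' <= B1 E gamma c M.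
Proof.
set d : R := ((M s)%:R)^-1 - ((M' s)%:R)^-1.
have Ms0 : 0 < (M s)%:R :> R by rewrite ltr0n; exact: hM.
have M's0 : 0 < (M' s)%:R :> R by rewrite ltr0n; apply: leq_trans (hM s) hle.
have d0 : 0 <= d.
  rewrite /d subr_ge0 lef_pV2 ?posrE // ler_nat //.
have vol0 : 0 <= vol gamma c s by rewrite /vol sumr_ge0.
have hchat : forall v, chat gamma c M' v
    = chat gamma c M v + d * (if gamma v == s then c v else 0).
  move=> v; rewrite /chat; case: eqP => [e|/eqP ne].
    by rewrite /d e; ring.
  by rewrite hother // mulr0 addr0.
have hsum : \sum_(t : S) vol gamma c t / (M' t)%:R
    = \sum_(t : S) vol gamma c t / (M t)%:R - d * vol gamma c s.
  rewrite (bigD1 s) //= [X in _ = X - _](bigD1 s) //=.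
  rewrite (eq_bigr (fun t => vol gamma c t / (M t)%:R)); last first.
    by move=> t ts; rewrite hother.
  rewrite /d; ring.
rewrite /B1 hsum.
suff H : len_hat E gamma c M' <= len_hat E gamma c M + d * vol gamma c s.
  move: H; set a := len_hat _ _ _ M'; set b := len_hat _ _ _ M.
  set e := d * _; set f := \sum_(_ : S) _; move=> H.
  by lra.
rewrite /len_hat /longest_path.
apply: bigmax0_le => [|n _].
  by rewrite addr_ge0 ?bigmax0_ge0 ?mulr_ge0.
apply: bigmax0_le => [|t /andP [pt ut]].
  by rewrite addr_ge0 ?bigmax0_ge0 ?mulr_ge0.
have Hw : path_weight (chat gamma c M') t
   <= path_weight (chat gamma c M) t + d * vol gamma c s.
  rewrite /path_weight (eq_bigr _ (fun v _ => hchat v)) big_split /= lerD2l.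
  rewrite -mulr_sumr ler_wpM2l //.
  rewrite big_uniq // big_mkcond /vol [X in _ <= X]big_mkcond /=.
  apply: ler_sum => v _; case: ifP => _; case: ifP => // _; exact: hc.

apply: (le_trans Hw); rewrite lerD2r.
rewrite (bigD1 n) //= le_max; apply/orP; left.
by apply: bigmax0_ub; rewrite pt ut.
Qed.
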